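(* Let $(Q,I)$ be a special biserial bound quiver over an algebraically closed field $k$. Let $u-\lambda v\in I$ be a binomial relation from a point $x$ to a point $y$ (so $u\neq v$ are parallel paths from $x$ to $y$, $u,v\notin I$, $\lambda\in k\setminus\{0\}$). Suppose that $u$ starts with a simple cycle $a=\alpha_1\cdots\alpha_r$ at $x$ (i.e. $u=ap$ for some path $p$). Then: (a) If $x\neq y$: (1) if $u$ and $v$ have at least one arrow in common, then there exist a path $p$ from $x$ to $y$ and a nontrivial cycle $b$ at $y$ such that $u=ap$ and $v=pb$; (2) if $u$ and $v$ have no arrow in common, then there is a decomposition $a=a_1a_2$ with $a_1,a_2$ nontrivial paths, and a natural number $n\geq 1$, such that $u=a^na_1$. (b) If $x=y$, then there exists a simple cycle $b=\beta_1\cdots\beta_s$ at $x$ (having no arrow in common with $a$) such that one of the following holds, for some natural numbers $n,m$ and some scalar $\lambda\in k\setminus\{0\}$: (3) the relation is $a^n-\lambda b^m$, and $\alpha_r\beta_1\in I$, $\beta_s\alpha_1\in I$; (4) the relation is $(ab)^m-\lambda(ba)^m$, and $\alpha_r\alpha_1\in I$, $\beta_s\beta_1\in I$; (5) the relation is $(ab)^ma-\lambda(ba)^mb$, and $\alpha_r\alpha_1\in I$, $\beta_s\beta_1\in I$.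
   Context: A bound quiver $(Q,I)$ consists of a finite quiver $Q$ and an admissible ideal $I$ of the path algebra $kQ$, i.e. $(kQ^+)^m\subseteq I\subseteq (kQ^+)^2$ for some $m\geq 2$, where $kQ^+$ is the ideal generated by the arrows. Paths are composed left to right ($\alpha\beta$ means $\alpha$ then $\beta$). It is special biserial if (i) every point is the source of at most two arrows and the target of at most two arrows, and (ii) for every arrow $\alpha:x\to y$ there is at most one arrow $\beta$ starting at $y$ with $\alpha\beta\notin I$ and at most one arrow $\gamma$ ending at $x$ with $\gamma\alpha\notin I$. A binomial relation is an element $u-\lambda v\in I$ with $u,v$ distinct parallel paths not in $I$ and $\lambda\neq0$. A cycle at $x$ is a path from $x$ to $x$; it is simple if $x$ occurs only at its beginning and end. *)

(* Defs.v *)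
From HB Require Import structures.
From mathcomp Require Import all_boot all_order all_algebra.
Set Implicit Arguments. Unset Strict Implicit. Unset Printing Implicit Defensive.
Import GRing.Theory.
Local Open Scope ring_scope.

Record quiver := Quiver {
  vert : finType;
  arr : finType;
  src : arr -> vert;
  tgt : arr -> vert }.

Section Paths.
Variable Q : quiver.

(* A (candidate) path: a starting point and the list of its arrows,
   composed left to right.  The trivial path e_x is (x, [::]). *)
Definition qpath := (vert Q * seq (arr Q))%type.

Fixpoint valid_from (x : vert Q) (s : seq (arr Q)) : bool :=
  match s with
  | [::] => true
  | a :: s' => (src a == x) && valid_from (tgt a) s'
  end.

Definition valid (p : qpath) : bool := valid_from p.1 p.2.

Definition pend (p : qpath) : vert Q := last p.1 (map (@tgt Q) p.2).

(* concatenation (meaningful when pend p = q.1) *)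
Definition pcat (p q : qpath) : qpath := (p.1, p.2 ++ q.2).

Definition ppow (p : qpath) (n : nat) : qpath := (p.1, flatten (nseq n p.2)).

Definition two (al be : arr Q) : qpath := (src al, [:: al; be]).

Definition simple_cycle (a : qpath) (x : vert Q) : bool :=
  [&& valid a, a.1 == x, pend a == x, a.2 != [::]
    & all (fun al => src al != x) (behead a.2)].

Variable K : fieldType.

(* elements of the path algebra kQ, as coefficient functions on paths *)
Definition kQ := qpath -> K.

Definition kQ_elt (f : kQ) : Prop :=
  (forall p, ~~ valid p -> f p = 0) /\
  exists s : seq qpath, forall p, p \notin s -> f p = 0.

Definition pind (p : qpath) : kQ := fun q => (q == p)%:R.

Definition lmul (q : qpath) (f : kQ) : kQ := fun p =>
  if (p.1 == q.1) && (take (size q.2) p.2 == q.2)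
  then f (pend q, drop (size q.2) p.2) else 0.

Definition rmul (f : kQ) (q : qpath) : kQ := fun p =>
  let k := (size p.2 - size q.2)%N in
  let p' := (p.1, take k p.2) in
  if [&& (size q.2 <= size p.2)%N, drop k p.2 == q.2 & pend p' == q.1]
  then f p' else 0.

Definition is_ideal (I : kQ -> Prop) : Prop :=
  (forall f, I f -> kQ_elt f) /\
  I (fun _ => 0) /\
  (forall f g, I f -> I g -> I (fun p => f p + g p)) /\
  (forall c f, I f -> I (fun p => c * f p)) /\
  (forall q f, valid q -> I f -> I (lmul q f) /\ I (rmul f q)) /\
  (forall f g, (forall p, f p = g p) -> I f -> I g).

(* admissible: (kQ^+)^m <= I <= (kQ^+)^2 for some m >= 2 *)
Definition admissible (I : kQ -> Prop) : Prop :=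
  is_ideal I /\
  (exists m : nat, (2 <= m)%N /\
     forall p, valid p -> (m <= size p.2)%N -> I (pind p)) /\
  (forall f p, I f -> (size p.2 < 2)%N -> f p = 0).

Definition special_biserial (I : kQ -> Prop) : Prop :=
  (forall x : vert Q, (#|[pred a : arr Q | src a == x]| <= 2)%N /\
                      (#|[pred a : arr Q | tgt a == x]| <= 2)%N) /\
  (forall al b1 b2 : arr Q, src b1 = tgt al -> src b2 = tgt al ->
     ~ I (pind (two al b1)) -> ~ I (pind (two al b2)) -> b1 = b2) /\
  (forall al g1 g2 : arr Q, tgt g1 = src al -> tgt g2 = src al ->
     ~ I (pind (two g1 al)) -> ~ I (pind (two g2 al)) -> g1 = g2).

Definition junction_in (I : kQ -> Prop) (p q : qpath) : Prop :=
  exists (al be : arr Q) (s t : seq (arr Q)),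
    p.2 = rcons s al /\ q.2 = be :: t /\ I (pind (two al be)).

End Paths.
Arguments pind {Q K} p _.

(* Main.v *)
Require Import Defs.
From HB Require Import structures.
From mathcomp Require Import all_boot all_order all_algebra.
From mathcomp Require Import ring zify.
From Stdlib Require Import Classical ClassicalEpsilon.
Set Implicit Arguments. Unset Strict Implicit. Unset Printing Implicit Defensive.
Import GRing.Theory.
Local Open Scope ring_scope.

Definition pb (P : Prop) : bool := if excluded_middle_informative P then true else false.
Lemma pbP P : reflect P (pb P).
Proof. by rewrite /pb; case: excluded_middle_informative => H; constructor. Qed.

Section Gen.
Variable Q : quiver.
Notation A := (arr Q).
Notation V := (vert Q).

Definition lend (x : V) (l : seq A) : V := last x (map (@tgt Q) l).

Lemma lend_cat x l1 l2 : lend x (l1 ++ l2) = lend (lend x l1) l2.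
Proof. by rewrite /lend map_cat last_cat. Qed.

Lemma valid_from_cat x l1 l2 :
  valid_from x (l1 ++ l2) = valid_from x l1 && valid_from (lend x l1) l2.
Proof.
elim: l1 x => [|c l1 IH] x //=; rewrite IH /lend /= andbA //.
Qed.

Lemma lend_cons x c l : lend x (c :: l) = lend (tgt c) l.
Proof. by []. Qed.

Lemma C1 (e : rel A) (He : forall a b1 b2, e a b1 -> e a b2 -> b1 = b2) a s1 s2 :
  path e a s1 -> path e a s2 ->
  (exists t, s1 = s2 ++ t) \/ (exists t, s2 = s1 ++ t).
Proof.
elim: s1 a s2 => [|b s1 IH] a [|c s2] /=.
- by left; exists [::].
- by move=> _ _; right; exists (c :: s2).
- by move=> _ _; left; exists (b :: s1).
move=> /andP[eb pb1] /andP[ec pc]; have E := He _ _ _ eb ec; subst c.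
case: (IH _ _ pb1 pc) => [[t ->]|[t ->]]; [left|right]; by exists t.
Qed.

Lemma C2 (e : rel A) (He : forall a b1 b2, e b1 a -> e b2 a -> b1 = b2) s1 s2 z :
  sorted e (rcons s1 z) -> sorted e (rcons s2 z) ->
  (exists t, rcons s1 z = t ++ rcons s2 z) \/ (exists t, rcons s2 z = t ++ rcons s1 z).
Proof.
move=> H1 H2.
have H1' : sorted (fun x y => e y x) (z :: rev s1) by rewrite -rev_rcons rev_sorted.
have H2' : sorted (fun x y => e y x) (z :: rev s2) by rewrite -rev_rcons rev_sorted.
have He' : forall a b1 b2, (fun x y => e y x) a b1 -> (fun x y => e y x) a b2 -> b1 = b2.
  by move=> a b1 b2 /= h1 h2; apply: (He a).
case: (C1 He' H1' H2') => [[t Ht]|[t Ht]]; [left|right]; exists (rev t).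
- by rewrite -(revK (rcons s1 z)) rev_rcons Ht rev_cons rev_cat revK rcons_cat.
- by rewrite -(revK (rcons s2 z)) rev_rcons Ht rev_cons rev_cat revK rcons_cat.
Qed.

End Gen.

Section Ideal.
Variable (k : fieldType) (Q : quiver).
Notation A := (arr Q).
Notation V := (vert Q).

Lemma lmul_pind (q p r : qpath Q) : pend q = p.1 ->
  lmul q (pind p) r = pind (q.1, q.2 ++ p.2) r :> k.
Proof.
case: q p r => [qx ql] [px pl] [rx rl] /= Hq; rewrite /lmul /pind /=.
case: ifP => [/andP[/eqP E1 /eqP E2]|H].
- congr (_%:R); congr (nat_of_bool _); apply/idP/idP => /eqP H; apply/eqP; move: H.
  + by case=> _ <-; rewrite E1 -{1}E2 cat_take_drop.
  + by case=> _ ->; rewrite Hq drop_size_cat.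
- case: eqP => // -[E1 E2]; move: H; by rewrite E1 E2 eqxx take_size_cat // eqxx.
Qed.

Lemma rmul_pind (p q r : qpath Q) : pend p = q.1 ->
  rmul (pind p) q r = pind (p.1, p.2 ++ q.2) r :> k.
Proof.
case: q p r => [qx ql] [px pl] [rx rl] /= Hq; rewrite /rmul /pind /=.
case: ifP => [/and3P[Hs /eqP E2 /eqP E3]|H].
- congr (_%:R); congr (nat_of_bool _); apply/idP/idP => /eqP H; apply/eqP; move: H.
  + by case=> -> <-; rewrite -[X in _ ++ X]E2 cat_take_drop.
  + by case=> -> ->; rewrite size_cat addnK take_size_cat.
- case: eqP => // -[E1 E2]; move: H; subst.
  rewrite size_cat leq_addl addnK drop_size_cat // take_size_cat //= eqxx.
  by rewrite !eqxx.
Qed.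


Variable I : kQ Q k -> Prop.
Hypothesis HI : is_ideal I.

Lemma I_ext f g : (forall p, f p = g p) -> I f -> I g.
Proof. by case: HI => _ [_ [_ [_ [_ H]]]]; apply: H. Qed.
Lemma I_add f g : I f -> I g -> I (fun p => f p + g p).
Proof. by case: HI => _ [_ [H _]]; apply: H. Qed.
Lemma I_scale c f : I f -> I (fun p => c * f p).
Proof. by case: HI => _ [_ [_ [H _]]]; apply: H. Qed.
Lemma I_lmul q f : valid q -> I f -> I (lmul q f).
Proof. by case: HI => _ [_ [_ [_ [H _]]]] Hq If; case: (H q f Hq If). Qed.
Lemma I_rmul q f : valid q -> I f -> I (rmul f q).
Proof. by case: HI => _ [_ [_ [_ [H _]]]] Hq If; case: (H q f Hq If). Qed.
Lemma I_zero : I (fun _ => 0).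
Proof. by case: HI => _ [H _]. Qed.

Lemma I_lmul_pind q p : valid q -> pend q = p.1 -> I (pind p) ->
  I (pind (q.1, q.2 ++ p.2)).
Proof.
move=> Hq E Ip; apply: (I_ext _ (I_lmul Hq Ip)) => r; exact: lmul_pind.
Qed.

Lemma I_rmul_pind q p : valid q -> pend p = q.1 -> I (pind p) ->
  I (pind (p.1, p.2 ++ q.2)).
Proof.
move=> Hq E Ip; apply: (I_ext _ (I_rmul Hq Ip)) => r; exact: rmul_pind.
Qed.

Lemma I_lmul_rel q u v c : valid q -> pend q = u.1 -> pend q = v.1 ->
  I (fun r => pind u r - c * pind v r) ->
  I (fun r => pind (q.1, q.2 ++ u.2) r - c * pind (q.1, q.2 ++ v.2) r).
Proof.
move=> Hq Eu Ev If; apply: (I_ext _ (I_lmul Hq If)) => r.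
rewrite -(lmul_pind _ Eu) -(lmul_pind _ Ev) /lmul.
by case: ifP => _ //; rewrite mulr0 subr0.
Qed.

Lemma I_rmul_rel q u v c : valid q -> pend u = q.1 -> pend v = q.1 ->
  I (fun r => pind u r - c * pind v r) ->
  I (fun r => pind (u.1, u.2 ++ q.2) r - c * pind (v.1, v.2 ++ q.2) r).
Proof.
move=> Hq Eu Ev If; apply: (I_ext _ (I_rmul Hq If)) => r.
rewrite -(rmul_pind _ Eu) -(rmul_pind _ Ev) /rmul.
by case: ifP => _ //; rewrite mulr0 subr0.
Qed.

Lemma I_pair x l1 al be l2 : valid (x, l1 ++ al :: be :: l2) ->
  I (pind (two al be)) -> I (pind (x, l1 ++ al :: be :: l2)).
Proof.
rewrite /valid /= valid_from_cat /= => /and3P[H1 /eqP Hal /andP[/eqP Hbe H2]] Ip.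
have Hr : valid (tgt be, l2) by [].
have := @I_rmul_pind (tgt be, l2) (two al be) Hr (erefl _) Ip; rewrite /two /= => Ip2.
have Hl : valid (x, l1) by [].
by have := @I_lmul_pind (x, l1) (src al, [:: al, be & l2]) Hl (esym Hal) Ip2.
Qed.

End Ideal.

Section Nil.
Variable (k : fieldType) (Q : quiver).
Notation A := (arr Q).
Notation V := (vert Q).
Variable I : kQ Q k -> Prop.
Hypothesis HA : admissible I.
Let HI : is_ideal I := HA.1.

Lemma NIL x lu lv t s c : valid (x,lu) -> valid (x,lv) -> lend x lu = lend x lv ->
  c != 0 -> I (fun r => pind (x,lu) r - c * pind (x,lv) r) -> ~ I (pind (x,lv)) ->
  lv != [::] -> lu = t ++ lv ++ s -> t ++ s != [::] -> False.
Proof.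
move=> Hu Hv Hend Hc Hrel Hnv Hne Elu Hts.
set y := lend x lv.
move: (Hu); rewrite Elu /valid /= !valid_from_cat => /and3P[Vt Vlv Vs].
have Ext : lend x t = x.
  move: Hne Vlv Hv; case: (lv) => // be lv' _ /= /andP[/eqP H1 _] /andP[/eqP H2 _].
  by rewrite -H1 H2.
rewrite Ext in Vs.
have Eys : lend y s = y by move: Hend; rewrite Elu !lend_cat Ext.
pose P N := iter N (fun l => t ++ l ++ s) lv.
have HP : forall N, valid_from x (P N) /\ lend x (P N) = y.
  elim=> [|N [IH1 IH2]]; first by split.
  rewrite /P /= -/(P N) !valid_from_cat !lend_cat Ext IH1 IH2 Vt Vs Eys.
  by split.
have HPs : forall N, (N <= size (P N))%N.
  elim=> [|N IH] //; rewrite /P /= -/(P N) !size_cat.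
  have : (0 < size t + size s)%N by rewrite lt0n -size_cat size_eq0.
  lia.
have R : forall N, I (fun r => pind (x, P N.+1) r - c * pind (x, P N) r).
  elim=> [|N IH].
  - by eapply (I_ext HI); last exact: Hrel; move=> r; rewrite /= -Elu.
  - have H1 := @I_rmul_rel _ _ _ HI (y, s) (x, P N.+1) (x, P N) c Vs (HP _).2 (HP _).2 IH.
    exact: (@I_lmul_rel _ _ _ HI (x, t) (x, P N.+1 ++ s) (x, P N ++ s) c Vt Ext Ext H1).
have T : forall N, I (fun r => pind (x, P N) r - c ^+ N * pind (x, lv) r).
  elim=> [|N IH].
  - by eapply (I_ext HI); last exact: (I_zero HI); move=> r /=; rewrite expr0 mul1r subrr.
  - eapply (I_ext HI); last exact: (I_add HI (R N) (I_scale HI c IH)); move=> r.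
    by rewrite exprS; ring.
case: HA => _ [[m [_ Hm]] _].
have IPm : I (pind (x, P m)) by apply: Hm; [exact: (HP m).1 | exact: HPs].
have H2 : I (fun r => c ^+ m * pind (x, lv) r).
  eapply (I_ext HI); last exact: (I_add HI (I_scale HI (-1) (T m)) IPm); move=> r /=. ring.
apply: Hnv; eapply (I_ext HI); last exact: (I_scale HI (c ^+ m)^-1 H2); move=> r /=.
by rewrite mulrA mulVf ?mul1r // expf_neq0.
Qed.

End Nil.

Section Chain.
Variable (k : fieldType) (Q : quiver).
Notation A := (arr Q).
Notation V := (vert Q).
Variable I : kQ Q k -> Prop.
Hypothesis HA : admissible I.
Hypothesis HSB : special_biserial I.
Let HI : is_ideal I := HA.1.

Definition ee : rel A := fun a b => pb (src b = tgt a /\ ~ I (pind (two a b))).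

Lemma ee_fun a b1 b2 : ee a b1 -> ee a b2 -> b1 = b2.
Proof.
move=> /pbP[H1 N1] /pbP[H2 N2]; case: HSB => _ [H _]; exact: H H1 H2 N1 N2.
Qed.

Lemma ee_bfun a b1 b2 : ee b1 a -> ee b2 a -> b1 = b2.
Proof.
move=> /pbP[H1 N1] /pbP[H2 N2]; case: HSB => _ [_ H]; exact: H (esym H1) (esym H2) N1 N2.
Qed.

Lemma notee a b : src b = tgt a -> ~~ ee a b -> I (pind (two a b)).
Proof.
move=> Hs /pbP Hn; apply: NNPP => Hi; apply: Hn; by split.
Qed.

Lemma chain_aux x l' : forall al l0, valid_from x (l0 ++ al :: l') ->
  ~ I (pind (x, l0 ++ al :: l')) -> path ee al l'.
Proof.
elim: l' => [|be l' IH] al l0 //= Hv Hn.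
apply/andP; split.
- apply/pbP; split.
  + by move: Hv; rewrite valid_from_cat /= => /and4P[_ _ /eqP -> _].
  + by move=> Hi; apply: Hn; apply: I_pair.
- by apply: (IH be (rcons l0 al)); rewrite cat_rcons.
Qed.

Lemma chain_of x l : valid (x, l) -> ~ I (pind (x, l)) -> sorted ee l.
Proof.
case: l => [|al l] //= Hv Hn; exact: (@chain_aux x l al [::]).
Qed.

End Chain.

Lemma rel_nonempty (k : fieldType) (Q : quiver) (I : kQ Q k -> Prop) (u v : qpath Q) c :
  admissible I -> u <> v -> c != 0 -> I (fun r => pind u r - c * pind v r) -> v.2 != [::].
Proof.
move=> [_ [_ H3]] Hne Hc Hr; apply/eqP => E.
have := H3 _ v Hr; rewrite E /= => /(_ isT).
rewrite /pind eqxx.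
have -> : (v == u) = false by apply/eqP => Ev; apply: Hne.
rewrite /= add0r mulr1 => /eqP; rewrite oppr_eq0 => /eqP Hc0.
by move: Hc; rewrite Hc0 eqxx.
Qed.

Lemma rel_sym (k : fieldType) (Q : quiver) (I : kQ Q k -> Prop) (u v : qpath Q) c :
  is_ideal I -> c != 0 -> I (fun r => pind u r - c * pind v r) ->
  I (fun r => pind v r - c^-1 * pind u r).
Proof.
move=> HI Hc Hr; eapply (I_ext HI); last exact: (I_scale HI (- c^-1) Hr).
move=> r /=; rewrite mulrBr !mulNr mulrA mulVf // mul1r opprK addrC; by [].
Qed.

Section Sets.
Variable Q : quiver.
Notation A := (arr Q).
Notation V := (vert Q).

Lemma out2 (x : V) (a1 b1 d : A) :
  (#|[pred a : A | src a == x]| <= 2)%N -> src a1 = x -> src b1 = x -> src d = x ->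
  a1 != b1 -> d = a1 \/ d = b1.
Proof.
move=> Hc H1 H2 H3 Hab; apply: NNPP => Hn.
have Hd1 : d != a1 by apply/eqP => E; apply: Hn; left.
have Hd2 : d != b1 by apply/eqP => E; apply: Hn; right.
have Hu : uniq [:: a1; b1; d] by rewrite /= !inE negb_or Hab eq_sym Hd1 eq_sym Hd2.
have Hs : [:: a1; b1; d] \subset [pred a : A | src a == x].
  by apply/subsetP => z; rewrite !inE => /or3P[] /eqP ->; rewrite ?H1 ?H2 ?H3 eqxx.
have := subset_leq_card Hs; rewrite (card_uniqP Hu) /= => H; by have := leq_trans H Hc.
Qed.

Lemma SUF (x : V) (t : seq A) c w :
  all (fun a => src a != x) (behead (t ++ c :: w)) -> src c = x -> t = [::].
Proof.
case: t => // a t /=; rewrite all_cat /= => /and3P[_ /eqP H _] Hc; by [].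
Qed.

Definition pw (l : seq A) n := flatten (nseq n l).

Lemma size_pw l n : size (pw l n) = (n * size l)%N.
Proof. by elim: n => //= n IH; rewrite /pw /= size_cat -/(pw l n) IH mulSn. Qed.

Lemma mem_pw l n d : d \in pw l n -> d \in l.
Proof. by elim: n => //= n IH; rewrite /pw /= mem_cat -/(pw l n) => /orP[//|/IH]. Qed.

Lemma lend_pw x l n : lend x l = x -> lend x (pw l n) = x.
Proof. by move=> H; elim: n => //= n IH; rewrite /pw /= lend_cat -/(pw l n) H IH. Qed.

Lemma valid_pw x l n : valid_from x l -> lend x l = x -> valid_from x (pw l n).
Proof.
by move=> H1 H2; elim: n => //= n IH; rewrite /pw /= valid_from_cat -/(pw l n) H1 H2 IH.
Qed.

Lemma pwSr l n : pw l n.+1 = pw l n ++ l.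
Proof. by rewrite /pw -addn1 nseqD flatten_cat /= cats0. Qed.

Lemma take_pw l n N r : (r < size l)%N -> (n < N)%N ->
  take (n * size l + r) (pw l N) = pw l n ++ take r l.
Proof.
elim: n N => [|n IH] [|N] //= Hr HN.
- by rewrite /pw /= take_cat Hr.
- rewrite /pw /= -/(pw l N) -/(pw l n) take_cat mulSn -addnA.
  have -> : (size l + (n * size l + r) < size l)%N = false by lia.
  by rewrite addKn IH // -catA.
Qed.

Lemma split_first (p : pred A) l : has p l ->
  exists l1 d l2, l = l1 ++ d :: l2 /\ ~~ has p l1 /\ p d.
Proof.
elim: l => //= a l IH; case Pa: (p a) => /= H.
- by exists [::], a, l.
- case: (IH H) => l1 [d [l2 [-> [H1 H2]]]]; exists (a :: l1), d, l2.
  by rewrite /= Pa.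
Qed.

Lemma behead_src (x : V) c l : valid_from (src c) (c :: l) ->
  all (fun d => tgt d != x) (belast c l) -> all (fun d => src d != x) l.
Proof.
elim: l c => //= d l IH c /andP[_ /andP[/eqP Hd Hv]] /andP[Hc Hb] /=.
rewrite Hd Hc /=; apply: (IH d) => //=; by rewrite eqxx.
Qed.

Lemma mem_split (d : A) l : d \in l -> exists l1 l2, l = l1 ++ d :: l2.
Proof. by case/splitPr => l1 l2; exists l1, l2. Qed.

End Sets.

Section Words.

Fixpoint alt (b : bool) (n : nat) : seq bool :=
  if n is n'.+1 then b :: alt (~~ b) n' else [::].

Lemma word_const (T : rel bool) b w : sorted T (b :: w) -> ~~ T b (~~ b) ->
  b :: w = nseq (size w).+1 b.
Proof.
elim: w => //= c w IH /andP[Hc Hp] Hn.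
have Ec : c = b by case: b c Hc Hn {IH Hp} => [] [] // ->.
subst c; by rewrite IH.
Qed.

Lemma word_single (T : rel bool) b w : sorted T (b :: w) -> ~~ T b b -> ~~ T b (~~ b) ->
  w = [::].
Proof.
case: w => //= c w /andP[Hc _] H1 H2.
by case: b c Hc H1 H2 => [] [] ->.
Qed.

Lemma word_alt (T : rel bool) : ~~ T true true -> ~~ T false false ->
  forall w b, sorted T (b :: w) -> b :: w = alt b (size w).+1.
Proof.
move=> H1 H2; elim=> //= c w IH b /andP[Hc Hp].
have Ec : c = ~~ b by case: b c Hc {IH Hp} => [] [] // Hc; [rewrite Hc in H1|rewrite Hc in H2].
subst c; by rewrite (IH _ Hp).
Qed.

Lemma alt_prefix b n m : (n <= m)%N -> exists r, alt b m = alt b n ++ r.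
Proof.
elim: n b m => [|n IH] b m Hnm; first by exists (alt b m).
case: m Hnm => // m Hnm; have [r Hr] := IH (~~ b) m Hnm.
by exists r; rewrite /= Hr.
Qed.

End Words.

Section Main.
Variable (k : fieldType) (Q : quiver) (I : kQ Q k -> Prop).
Notation A := (arr Q).
Notation V := (vert Q).
Hypothesis HA : admissible I.
Hypothesis HSB : special_biserial I.
Let HI : is_ideal I := HA.1.
Variable x : V.
Variables (al1 be1 : A) (la' lp lv' : seq A) (lam : k).
Let la := al1 :: la'.
Let lu := la ++ lp.
Let lv := be1 :: lv'.
Hypothesis Hu : valid_from x lu.
Hypothesis Hv : valid_from x lv.
Hypothesis Hend : lend x lu = lend x lv.
Hypothesis Hne : lu <> lv.
Hypothesis HnU : ~ I (pind (x, lu)).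
Hypothesis HnV : ~ I (pind (x, lv)).
Hypothesis Hlam : lam != 0.
Hypothesis Hrel : I (fun r => pind (x, lu) r - lam * pind (x, lv) r).
Hypothesis Hla_end : lend x la = x.
Hypothesis Hla_simp : all (fun d => src d != x) la'.

Notation e := (ee I).

Lemma NILu t s : lu = t ++ lv ++ s -> t ++ s != [::] -> False.
Proof. move=> E1 E2; exact: (NIL HA Hu Hv Hend Hlam Hrel HnV isT E1 E2). Qed.

Lemma NILv t s : lv = t ++ lu ++ s -> t ++ s != [::] -> False.
Proof.
move=> E1 E2.
have Hr := rel_sym HI Hlam Hrel.
have Hlam' : lam^-1 != 0 by rewrite invr_eq0.
exact: (NIL HA Hv Hu (esym Hend) Hlam' Hr HnU isT E1 E2).
Qed.

Lemma sorted_u : sorted e lu.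
Proof. exact: (chain_of HA Hu HnU). Qed.
Lemma sorted_v : sorted e lv.
Proof. exact: (chain_of HA Hv HnV). Qed.

Lemma sorted_la : sorted e la.
Proof. by have := sorted_u; rewrite /lu => /cat_sorted2[]. Qed.

Lemma valid_la : valid_from x la.
Proof. by move: Hu; rewrite /lu valid_from_cat => /andP[]. Qed.

Lemma src_al1 : src al1 = x.
Proof. by move: Hu => /= /andP[/eqP]. Qed.
Lemma src_be1 : src be1 = x.
Proof. by move: Hv => /= /andP[/eqP]. Qed.

Lemma first_diff : al1 != be1.
Proof.
apply/eqP => E.
have P1 : path e al1 (la' ++ lp) by exact: sorted_u.
have P2 : path e al1 lv' by rewrite E; exact: sorted_v.
case: (C1 (@ee_fun _ _ _ HSB) P1 P2) => [[t Ht]|[t Ht]].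
- apply: (@NILu [::] t); first by rewrite /lu /la /lv /= Ht E.
  rewrite /=; apply/eqP => t0; apply: Hne; by rewrite /lu /la /lv /= Ht t0 cats0 E.
- apply: (@NILv [::] t); first by rewrite /lu /la /lv /= -E Ht -catA.
  rewrite /=; apply/eqP => t0; apply: Hne; rewrite /lu /la /lv -E /= Ht t0 cats0 //.
Qed.

Lemma out2x d : src d = x -> d = al1 \/ d = be1.
Proof.
move=> Hd; case: HSB => [Hc _]; have [Hc1 _] := Hc x.
exact: (out2 Hc1 src_al1 src_be1 Hd first_diff).
Qed.

Lemma in_la_x d : d \in la -> src d = x -> d = al1.
Proof.
rewrite inE => /orP[/eqP //|Hd] Hs.
by move: Hla_simp => /allP /(_ d Hd); rewrite Hs eqxx.
Qed.


Lemma lp_head : x <> lend x lu ->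
  exists ga lp', lp = ga :: lp' /\ src ga = x /\ e (last al1 la') ga.
Proof.
move=> Hx; case E: lp => [|ga lp'].
  by exfalso; apply: Hx; rewrite /lu E cats0.
exists ga, lp'; split => //; split.
- by move: Hu; rewrite /lu valid_from_cat E Hla_end /= => /and3P[_ /eqP].
- by have := sorted_u; rewrite /lu E /= cat_path => /andP[_ /andP[]].
Qed.

Lemma sorted_pw_gen l c r N : sorted e l -> l = c :: r -> e (last c r) c ->
  sorted e (pw l N).
Proof.
move=> Hs El He; elim: N => [|N IH] //.
rewrite /pw /= -/(pw l N); case: N IH => [|N] IH; first by rewrite cats0.
move: IH; rewrite El /pw /= -/(pw l N) => IH.
rewrite cat_path /=; move: Hs; rewrite El /= => -> /=; by rewrite He.
Qed.

Lemma caseA_be lp' : lp = be1 :: lp' -> exists t, lv = lp ++ t /\ t != [::].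
Proof.
move=> Elp.
have P1 : path e be1 lp'.
  by have := sorted_u; rewrite /lu Elp /= cat_path => /andP[_ /andP[]].
have P2 : path e be1 lv' by exact: sorted_v.
case: (C1 (@ee_fun _ _ _ HSB) P1 P2) => [[t Ht]|[t Ht]].
- exfalso; apply: (@NILu la t); first by rewrite /lu /lv Elp Ht.
  by [].
- case: t Ht => [|c t] Ht.
  + exfalso; apply: (@NILu la [::]); first by rewrite /lu /lv Elp Ht !cats0.
    by [].
  + by exists (c :: t); rewrite /lv Elp Ht.
Qed.

Lemma caseA_al lp' : lp = al1 :: lp' -> exists t, pw la (size lu).+1 = lu ++ t.
Proof.
move=> Elp.
have He : e (last al1 la') al1.
  by have := sorted_u; rewrite /lu Elp /= cat_path => /andP[_ /andP[]].
have Hs := sorted_pw_gen (size lu).+1 sorted_la (erefl _) He.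
have P1 : path e al1 (la' ++ lp) by exact: sorted_u.
have P2 : path e al1 (la' ++ pw la (size lu)) by exact: Hs.
case: (C1 (@ee_fun _ _ _ HSB) P1 P2) => [[t Ht]|[t Ht]].
- exfalso; move: Ht; move: (pw la (size lu)) (size_pw la (size lu)) => W HW Ht.
  have := congr1 size Ht; rewrite !size_cat HW => Hsz.
  have H1 : (size lu <= size lu * size la)%N by rewrite leq_pmulr.
  have H2 : size lu = (size la + size lp)%N by rewrite /lu size_cat.
  move: Hsz H1 H2; have H3 : size la = (size la').+1 by []. lia.
- exists t; transitivity (al1 :: (la' ++ pw la (size lu))); first by [].
  by rewrite Ht.
Qed.

Lemma caseA2 lp' : x <> lend x lu -> lp = al1 :: lp' ->
  exists r n, (0 < r)%N /\ (r < size la)%N /\ (1 <= n)%N /\ lu = pw la n ++ take r la.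
Proof.
move=> Hx Elp; have [t Ht] := caseA_al Elp.
have Hsz : (0 < size la)%N by [].
exists (size lu %% size la)%N, (size lu %/ size la)%N.
have Hr : ((size lu %% size la) < size la)%N by rewrite ltn_mod.
have Hn : ((size lu %/ size la) < (size lu).+1)%N.
  by rewrite ltnS; apply: leq_div.
have Elu : lu = pw la (size lu %/ size la)%N ++ take (size lu %% size la)%N la.
  rewrite -(take_pw Hr Hn) -divn_eq Ht take_size_cat //.
split; last split => //; last split.
- rewrite lt0n; apply/negP => /eqP H0; apply: Hx.
  by rewrite Elu H0 take0 cats0 lend_pw.
- rewrite divn_gt0 // /lu size_cat; lia.
- exact: Elu.
Qed.

Lemma caseA1_contra lp' d : lp = al1 :: lp' -> d \in lu -> d \in lv -> False.
Proof.
move=> Elp Hdu Hdv; have [t Ht] := caseA_al Elp.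
have He : e (last al1 la') al1.
  by have := sorted_u; rewrite /lu Elp /= cat_path => /andP[_ /andP[]].
have Hdla : d \in la by apply: (@mem_pw _ la (size lu).+1); rewrite Ht mem_cat Hdu.
have [l1 [l2 El]] := mem_split Hdla.
have [v1 [v2 Ev]] := mem_split Hdv.
pose K := size lv.
have Hs := sorted_pw_gen K.+1 sorted_la (erefl _) He.
have Hs' : sorted e (rcons (pw la K ++ l1) d ++ l2).
  by rewrite -cats1 -!catA /= -El -pwSr.
have S1 := (cat_sorted2 Hs').1.
have S2 : sorted e (rcons v1 d).
  by have := sorted_v; rewrite Ev -cat_rcons => /cat_sorted2[].
case: (C2 (@ee_bfun _ _ _ HSB) S1 S2) => [[s Hs1]|[s Hs1]].
- have Hb : be1 \in rcons v1 d.
    move: Ev; rewrite /lv; case: v1 {S2 Hs1} => [|c v1] /= [-> _]; by rewrite inE eqxx.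

  have : be1 \in la.
    have : be1 \in s ++ rcons v1 d by rewrite mem_cat Hb orbT.
    rewrite -Hs1 mem_rcons inE mem_cat.
    case/orP => [/eqP ->|/orP[/mem_pw //|H]]; rewrite El mem_cat inE ?eqxx ?orbT //.
    by rewrite H.
  move=> /in_la_x /(_ src_be1) E; by move: first_diff; rewrite E eqxx.
- have := congr1 size Hs1; rewrite !size_cat !size_rcons size_cat size_pw.
  have H1 : (K <= K * size la)%N by rewrite leq_pmulr.
  have H2 : K = (size v1 + (size v2).+1)%N by rewrite /K Ev size_cat.
  lia.
Qed.

Lemma b_exists : lend x lu = x ->
  exists lb' l2, lv = (be1 :: lb') ++ l2 /\ lend x (be1 :: lb') = x /\
    all (fun d => src d != x) lb'.
Proof.
move=> Hxy.
have Hl : tgt (last be1 lv') = x.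
  by have := Hend; rewrite Hxy /lend /lv /= (last_map (@tgt Q)) => <-.
have Hh : has (fun d => tgt d == x) lv.
  by apply/hasP; exists (last be1 lv'); [exact: mem_last | rewrite Hl].
have [l1 [d [l2 [El [Hn Hd]]]]] := split_first Hh.
have [lb' Elb] : exists lb', rcons l1 d = be1 :: lb'.
  move: El; rewrite /lv; case: (l1) => [|c l1'] /= [-> _]; first by exists [::].
  by exists (rcons l1' d).
exists lb', l2; split; first by rewrite -Elb cat_rcons.
split.
- by rewrite -Elb /lend map_rcons last_rcons; apply/eqP.
- have Hvb : valid_from (src be1) (be1 :: lb').
    rewrite src_be1 -Elb; move: Hv; rewrite El -cat_rcons valid_from_cat.
    by case/andP.
  apply: (behead_src Hvb).
  have -> : belast be1 lb' = l1.
    have := lastI be1 lb'; rewrite -Elb => /rcons_inj [] //.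
  by rewrite all_predC.
Qed.

Section Bpart.
Variables (lb' l2 : seq A).
Let lb := be1 :: lb'.
Hypothesis Hlv : lv = lb ++ l2.
Hypothesis Hlb_end : lend x lb = x.
Hypothesis Hlb_simp : all (fun d => src d != x) lb'.
Hypothesis Hxy : lend x lu = x.

Lemma sorted_lb : sorted e lb.
Proof. by have := sorted_v; rewrite Hlv => /cat_sorted2[]. Qed.

Lemma valid_lb : valid_from x lb.
Proof. by move: Hv; rewrite Hlv valid_from_cat => /andP[]. Qed.


Lemma head_rcons (c d : A) L' p q : c :: L' = rcons p d ++ q -> exists w, rcons p d = c :: w.
Proof.
case: p => [|a p] /= [-> _]; first by exists [::].
by exists (rcons p d).
Qed.

Lemma disjoint_ab d : d \in la -> d \notin lb.
Proof.
move=> Hda; apply/negP => Hdb.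
have [m1 [m2 Ea]] := mem_split Hda.
have [n1 [n2 Eb]] := mem_split Hdb.
have S1 : sorted e (rcons m1 d).
  by have := sorted_la; rewrite Ea -cat_rcons => /cat_sorted2[].
have S2 : sorted e (rcons n1 d).
  by have := sorted_lb; rewrite Eb -cat_rcons => /cat_sorted2[].
have Ea' : al1 :: la' = rcons m1 d ++ m2 by rewrite cat_rcons -Ea.
have Eb' : be1 :: lb' = rcons n1 d ++ n2 by rewrite cat_rcons -Eb.
have [wa Ewa] := head_rcons Ea'.
have [wb Ewb] := head_rcons Eb'.
case: (C2 (@ee_bfun _ _ _ HSB) S1 S2) => [[t Ht]|[t Ht]].
- have E2 : la = t ++ be1 :: (wb ++ m2) by rewrite /la Ea' Ht Ewb -catA.
  have Ht0 : t = [::].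
    apply: (SUF (x := x) (w := wb ++ m2)); last exact: src_be1.
    by rewrite -E2.
  move: E2; rewrite Ht0 /la /= => -[E _]; by move: first_diff; rewrite E eqxx.
- have E2 : lb = t ++ al1 :: (wa ++ n2) by rewrite /lb Eb' Ht Ewa -catA.
  have Ht0 : t = [::].
    apply: (SUF (x := x) (w := wa ++ n2)); last exact: src_al1.
    by rewrite -E2.
  move: E2; rewrite Ht0 /lb /= => -[E _]; by move: first_diff; rewrite E eqxx.
Qed.

Definition fa (b : bool) := if b then al1 else be1.
Definition bt (b : bool) := if b then la' else lb'.
Definition blk (b : bool) := fa b :: bt b.
Definition lst (b : bool) := last (fa b) (bt b).
Definition expand (w : seq bool) := flatten (map blk w).
Definition TT : rel bool := fun b1 b2 => e (lst b1) (fa b2).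

Lemma blk_sorted b : sorted e (blk b).
Proof. by case: b; [exact: sorted_la | exact: sorted_lb]. Qed.
Lemma blk_valid b : valid_from x (blk b).
Proof. by case: b; [exact: valid_la | exact: valid_lb]. Qed.
Lemma blk_end b : lend x (blk b) = x.
Proof. by case: b. Qed.
Lemma blk_simp b : all (fun d => src d != x) (bt b).
Proof. by case: b. Qed.
Lemma fa_src b : src (fa b) = x.
Proof. by case: b; [exact: src_al1 | exact: src_be1]. Qed.
Lemma lst_tgt b : tgt (lst b) = x.
Proof. by have := blk_end b; rewrite /lend /blk /= (last_map (@tgt Q)). Qed.

Lemma DEC n : forall W b W', (size W < n)%N -> W = fa b :: W' -> sorted e W ->
  valid_from x W -> lend x W = x -> exists w, W = expand (b :: w) /\ sorted TT (b :: w).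
Proof.
elim: n => // n IH W b W' Hn EW HsW HvW HeW.
have Hp1 : path e (fa b) W' by move: HsW; rewrite EW.
have Hp2 : path e (fa b) (bt b) by exact: blk_sorted.
case: (C1 (@ee_fun _ _ _ HSB) Hp1 Hp2) => [[t Ht]|[t Ht]].
- case: t Ht => [|c t] Ht.
    by exists [::]; rewrite EW Ht /expand /= !cats0.
  have EW2 : W = blk b ++ c :: t by rewrite EW Ht.
  move: HvW; rewrite EW2 valid_from_cat blk_end => /andP[_ Hvt].
  have Hsc : src c = x by move: Hvt => /= /andP[/eqP].
  have [b'' Eb''] : exists b'', c = fa b''.
    by case: (out2x Hsc) => ->; [exists true | exists false].
  have Hpc : path e (lst b) (c :: t).
    by move: HsW; rewrite EW2 /blk /= cat_path => /andP[].
  have Hec : TT b b'' by move: Hpc => /= /andP[]; rewrite /TT -Eb''.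
  have [w [Ew Sw]] : exists w, c :: t = expand (b'' :: w) /\ sorted TT (b'' :: w).
    apply: (IH (c :: t) b'' t) => //.
    + by move: Hn; rewrite EW2 size_cat /blk /=; lia.
    + by rewrite Eb''.
    + exact: path_sorted Hpc.
    + by move: HeW; rewrite EW2 lend_cat blk_end.
  exists (b'' :: w); split.
  + by rewrite Ew.
  + by rewrite /= Hec; exact: Sw.
- case: t Ht => [|c t] Ht.
    by exists [::]; rewrite EW /expand /blk /= Ht !cats0.
  exfalso.
  have Hvb := blk_valid b; rewrite /blk Ht -cat_cons -EW valid_from_cat HeW in Hvb.
  have Hsc : src c = x by move: Hvb => /andP[_ /= /andP[/eqP]].
  have := blk_simp b; rewrite Ht all_cat /= Hsc eqxx /=; by rewrite andbF.
Qed.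

Lemma expand_nseq b n : expand (nseq n b) = pw (blk b) n.
Proof. by rewrite /expand map_nseq. Qed.

Lemma expand_cat w1 w2 : expand (w1 ++ w2) = expand w1 ++ expand w2.
Proof. by rewrite /expand map_cat flatten_cat. Qed.

Lemma pw_shift (X Y : seq A) m : X ++ pw (Y ++ X) m = pw (X ++ Y) m ++ X.
Proof.
elim: m => [|m IH]; first by rewrite /pw /= cats0.
by rewrite /pw /= -/(pw (Y ++ X) m) -/(pw (X ++ Y) m) -!catA IH.
Qed.

Lemma expand_alt_even b m : expand (alt b m.*2) = pw (blk b ++ blk (~~ b)) m.
Proof.
elim: m b => [|m IH] b //; rewrite doubleS /= negbK.
rewrite /expand /= -/(expand (alt b m.*2)) IH /pw /=; by rewrite -catA.
Qed.

Lemma expand_alt_odd b m : expand (alt b m.*2.+1) = pw (blk b ++ blk (~~ b)) m ++ blk b.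
Proof.
rewrite /= /expand /= -/(expand (alt (~~ b) m.*2)) expand_alt_even negbK.
exact: (pw_shift (blk b) (blk (~~ b)) m).
Qed.

Lemma jI b1 b2 : ~~ TT b1 b2 -> I (pind (two (lst b1) (fa b2))).
Proof. by apply: notee; rewrite fa_src lst_tgt. Qed.

Lemma partB : exists n m,
 (lu = pw la n /\ lv = pw lb m /\
    I (pind (two (lst true) be1)) /\ I (pind (two (lst false) al1))) \/
 (lu = pw (la ++ lb) m /\ lv = pw (lb ++ la) m /\
    I (pind (two (lst true) al1)) /\ I (pind (two (lst false) be1))) \/
 (lu = pw (la ++ lb) m ++ la /\ lv = pw (lb ++ la) m ++ lb /\
    I (pind (two (lst true) al1)) /\ I (pind (two (lst false) be1))).
Proof.
have [wu [Eu Su]] := @DEC (size lu).+1 lu true (la' ++ lp) (ltnSn _) erefl sorted_u Hu Hxy.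
have Hxv : lend x lv = x by rewrite -Hend.
have [wv [Ev Sv]] := @DEC (size lv).+1 lv false lv' (ltnSn _) erefl sorted_v Hv Hxv.
have Hdl : lst true != lst false.
  apply/eqP => E; have := @disjoint_ab (lst true).
  by rewrite mem_last E mem_last => /(_ isT).
have X1 : TT true true -> ~~ TT true false.
  move=> h; apply/negP => h'; have := ee_fun HSB h h' => /= E.
  by move: first_diff; rewrite E eqxx.
have X2 : TT true true -> ~~ TT false true.
  move=> h; apply/negP => h'; have := ee_bfun HSB h h' => /= E.
  by move: Hdl; rewrite E eqxx.
have X3 : TT false false -> ~~ TT true false.
  move=> h; apply/negP => h'; have := ee_bfun HSB h' h => /= E.
  by move: Hdl; rewrite E eqxx.
have X4 : TT false false -> ~~ TT false true.
  move=> h; apply/negP => h'; have := ee_fun HSB h h' => /= E.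
  by move: first_diff; rewrite E eqxx.
case Haa: (TT true true).
  exists (size wu).+1, (size wv).+1; left.
  rewrite Eu Ev (word_const Su (X1 Haa)) (word_const Sv (X2 Haa)) !expand_nseq.
  by split; [|split; [|split]] => //; [exact: (jI (X1 Haa)) | exact: (jI (X2 Haa))].
case Hbb: (TT false false).
  exists 1, (size wv).+1; left.
  have Ew := word_single Su (negbT Haa) (X3 Hbb).
  rewrite Eu Ev Ew (word_const Sv (X4 Hbb)) !expand_nseq.
  split; first by rewrite /expand /= /pw /=.
  by split; [|split] => //; [exact: (jI (X3 Hbb)) | exact: (jI (X4 Hbb))].
have Hu' := word_alt (negbT Haa) (negbT Hbb) Su.
have Hv' := word_alt (negbT Haa) (negbT Hbb) Sv.
case: (ltngtP (size wu) (size wv)) => Hs.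
- exfalso.
  have [r Hr] := @alt_prefix true (size wu).+1 (size wv) Hs.
  apply: (@NILv lb (expand r)) => //.
  rewrite Ev Hv' /= Hr -Hu' -cat_cons expand_cat.
  have -> : expand (false :: true :: wu) = lb ++ expand (true :: wu) by [].
  by rewrite -Eu -catA.
- exfalso.
  have [r Hr] := @alt_prefix false (size wv).+1 (size wu) Hs.
  apply: (@NILu la (expand r)) => //.
  rewrite Eu Hu' /= Hr -Hv' -cat_cons expand_cat.
  have -> : expand (true :: false :: wv) = la ++ expand (false :: wv) by [].
  by rewrite -Ev -catA.
- have J1 := jI (negbT Haa); have J2 := jI (negbT Hbb).
  rewrite Eu Ev Hu' Hv' -Hs.
  move: (size wu).+1 (odd_double_half (size wu).+1) => L Ep.
  have [m [Hm|Hm]] : exists m, L = m.*2.+1 \/ L = m.*2.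
    by exists L./2; case: (odd L) Ep => Ep; [left|right]; rewrite -[LHS]Ep.
  + exists 0, m; rewrite Hm; right; right; rewrite !expand_alt_odd; by split.
  + exists 0, m; rewrite Hm; right; left; rewrite !expand_alt_even; by split.
Qed.

End Bpart.

Lemma mainA : x <> lend x lu ->
  ((exists d, d \in lu /\ d \in lv) -> exists t, lv = lp ++ t /\ t != [::]) /\
  ((forall d, d \in lu -> d \notin lv) ->
     exists r n, (0 < r)%N /\ (r < size la)%N /\ (1 <= n)%N /\ lu = pw la n ++ take r la).
Proof.
have _ := (Hu, Hv, Hend, Hne, HnU, HnV, Hlam, Hrel, Hla_end, Hla_simp, HA, HSB).
move=> Hx; have [ga [lp' [Elp [Hs _]]]] := lp_head Hx.
case: (out2x Hs) => Eg; subst ga.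
- split.
  + by move=> [d [H1 H2]]; exfalso; exact: (caseA1_contra Elp H1 H2).
  + by move=> _; exact: (caseA2 Hx Elp).
- split.
  + by move=> _; exact: (caseA_be Elp).
  + move=> H; exfalso; have := H be1.
    by rewrite /lu Elp mem_cat mem_head orbT /lv mem_head => /(_ isT).
Qed.

Lemma mainB : lend x lu = x ->
  exists lb' l2, lv = (be1 :: lb') ++ l2 /\ lend x (be1 :: lb') = x /\
    all (fun d => src d != x) lb' /\
    (forall d, d \in la -> d \notin be1 :: lb') /\
    exists n m,
 (lu = pw la n /\ lv = pw (be1 :: lb') m /\
    I (pind (two (last al1 la') be1)) /\ I (pind (two (last be1 lb') al1))) \/
 (lu = pw (la ++ (be1 :: lb')) m /\ lv = pw ((be1 :: lb') ++ la) m /\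
    I (pind (two (last al1 la') al1)) /\ I (pind (two (last be1 lb') be1))) \/
 (lu = pw (la ++ (be1 :: lb')) m ++ la /\ lv = pw ((be1 :: lb') ++ la) m ++ (be1 :: lb') /\
    I (pind (two (last al1 la') al1)) /\ I (pind (two (last be1 lb') be1))).
Proof.
have _ := (Hu, Hv, Hend, Hne, HnU, HnV, Hlam, Hrel, Hla_end, Hla_simp, HA, HSB).
move=> Hxy; have [lb' [l2 [Hlv [He Hs]]]] := b_exists Hxy.
exists lb', l2; split => //; split => //; split => //; split.
- by move=> d; apply: (disjoint_ab Hlv Hs).
- exact: (partB Hlv He Hs Hxy).
Qed.

End Main.
Theorem lemma2p1 (k : closedFieldType) (Q : quiver) (I : kQ Q k -> Prop)
  (x y : vert Q) (u v a : qpath Q) (lam : k) :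
  admissible I -> special_biserial I ->
  valid u -> valid v -> u.1 = x -> v.1 = x -> pend u = y -> pend v = y ->
  u <> v -> ~ I (pind u) -> ~ I (pind v) -> lam != 0 ->
  I (fun p => pind u p - lam * pind v p) ->
  simple_cycle a x ->
  (exists p, valid p /\ p.1 = pend a /\ u = pcat a p) ->
  (x <> y ->
     ((exists al, al \in u.2 /\ al \in v.2) ->
        exists p b : qpath Q,
          valid p /\ p.1 = x /\ pend p = y /\
          valid b /\ b.1 = y /\ pend b = y /\ b.2 != [::] /\
          u = pcat a p /\ v = pcat p b) /\
     ((forall al, al \in u.2 -> al \notin v.2) ->
        exists (a1 a2 : qpath Q) (n : nat),
          valid a1 /\ a1.1 = x /\ valid a2 /\ a2.1 = pend a1 /\
          a1.2 != [::] /\ a2.2 != [::] /\ a = pcat a1 a2 /\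
          (1 <= n)%N /\ u = pcat (ppow a n) a1)) /\
  (x = y ->
     exists b : qpath Q,
       simple_cycle b x /\ (forall al, al \in a.2 -> al \notin b.2) /\
       exists n m : nat,
         (u = ppow a n /\ v = ppow b m /\
            junction_in I a b /\ junction_in I b a) \/
         (u = ppow (pcat a b) m /\ v = ppow (pcat b a) m /\
            junction_in I a a /\ junction_in I b b) \/
         (u = pcat (ppow (pcat a b) m) a /\ v = pcat (ppow (pcat b a) m) b /\
            junction_in I a a /\ junction_in I b b)).
Proof.
move=> HA HSB Hvu Hvv Hu1 Hv1 Hpu Hpv Hne HnU HnV Hlam Hrel Hsc [[px lp] [Hvp [Hp1 Hup]]].
have Hlv0 := rel_nonempty HA Hne Hlam Hrel.
case: u Hvu Hu1 Hpu Hne HnU Hrel Hup => ux lu Hvu Hu1 Hpu Hne HnU Hrel Hup.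
case: v Hvv Hv1 Hpv Hne HnV Hrel Hlv0 => vx lv Hvv Hv1 Hpv Hne HnV Hrel Hlv0.
case: a Hsc Hp1 Hup => ax la Hsc Hp1 Hup.
simpl in Hu1, Hv1, Hlv0; subst ux vx.
move: Hsc => /and5P[Hva /eqP /= Hax Hpa Hne0 Hall]; subst ax.
case: la Hva Hpa Hne0 Hall Hp1 Hup => // al1 la' Hva /eqP Hpa _ Hall Hp1 Hup.
case: lv Hvv Hpv Hne HnV Hrel Hlv0 => // be1 lv' Hvv Hpv Hne HnV Hrel _.
move: Hup; rewrite /pcat /= => -[Elu]; subst lu.
simpl in Hp1; subst px.
have Hend : lend x ((al1 :: la') ++ lp) = lend x (be1 :: lv') := etrans Hpu (esym Hpv).
have Hne' : (al1 :: la') ++ lp <> be1 :: lv' by move=> E; apply: Hne; congr (_, _).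
have Hla_end : lend x (al1 :: la') = x by exact: Hpa.
have Hvu' : valid_from x ((al1 :: la') ++ lp) := Hvu.
have Hvv' : valid_from x (be1 :: lv') := Hvv.
have Hva' : valid_from x (al1 :: la') := Hva.
have Hpu' : lend x ((al1 :: la') ++ lp) = y := Hpu.
have Hpv' : lend x (be1 :: lv') = y := Hpv.
split.
- move=> Hxy.
  have Hx : x <> lend x ((al1 :: la') ++ lp) by rewrite Hpu'.
  have [A1 A2] := mainA HA HSB Hvu Hvv Hend Hne' HnU HnV Hlam Hrel Hla_end Hall Hx.
  split.
  + move=> [al [H1 H2]]; have [t [Et Ht]] := A1 (ex_intro _ al (conj H1 H2)).
    have Vlp : valid_from x lp.
      by move: Hvu'; rewrite valid_from_cat Hla_end => /andP[].
    have Elp : lend x lp = y by rewrite -Hpu' lend_cat Hla_end.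
    exists (x, lp), (y, t); split => //; split => //; split => //; split.
      by move: Hvv'; rewrite Et valid_from_cat Elp => /andP[].
    split => //; split.
      by change (lend y t = y); rewrite -{1}Elp -lend_cat -Et Hpv'.
    by split => //; split => //; rewrite Et.
  + move=> H; have [r [n [Hr0 [Hr [Hn Elu]]]]] := A2 H.
    exists (x, take r (al1 :: la')), (lend x (take r (al1 :: la')), drop r (al1 :: la')), n.
    move: Hva'; rewrite -{1}(cat_take_drop r (al1 :: la')) valid_from_cat => /andP[V1 V2].
    split => //; split => //; split => //; split => //; split.
      by rewrite -size_eq0 size_take Hr -lt0n.
    split.
      by rewrite -size_eq0 size_drop subn_eq0 -ltnNge.
    split; first by rewrite /pcat /= cat_take_drop.
    by split => //; congr (_, _); exact: Elu.
- move=> Hxy; rewrite -Hxy in Hpu' Hpv'.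
  have [lb' [l2 [Elv [Hlb_end [Hlb_simp [Hdis [n [m Hcases]]]]]]]] :=
    mainB HA HSB Hvu Hvv Hend Hne' HnU HnV Hlam Hrel Hla_end Hall Hpu'.
  have Vb : valid_from x (be1 :: lb').
    by move: Hvv'; rewrite Elv valid_from_cat => /andP[].
  exists (x, be1 :: lb'); split.
    by rewrite /simple_cycle /valid; apply/and5P; split => //; apply/eqP.
  split; first exact: Hdis.
  have JA : forall be t,
      I (pind (two (last al1 la') be)) -> junction_in I (x, al1 :: la') (x, be :: t).
    move=> be t Hi; exists (last al1 la'), be, (belast al1 la'), t.
    by rewrite /= -lastI.
  have JB : forall al t, I (pind (two (last be1 lb') al)) ->
      junction_in I (x, be1 :: lb') (x, al :: t).
    move=> al t Hi; exists (last be1 lb'), al, (belast be1 lb'), t.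
    by rewrite /= -lastI.
  exists n, m.
  case: Hcases => [[E1 [E2 [I1 I2]]]|[[E1 [E2 [I1 I2]]]|[E1 [E2 [I1 I2]]]]].
  + left; split; first by congr (_, _); exact: E1.
    split; first by congr (_, _); exact: E2.
    by split; [exact: (JA _ _ I1) | exact: (JB _ _ I2)].
  + right; left; split; first by congr (_, _); exact: E1.
    split; first by congr (_, _); exact: E2.
    by split; [exact: (JA _ _ I1) | exact: (JB _ _ I2)].
  + right; right; split; first by congr (_, _); exact: E1.
    split; first by congr (_, _); exact: E2.
    by split; [exact: (JA _ _ I1) | exact: (JB _ _ I2)].
Qed.
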